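(* Let $G=(V,E)$ be a network as in the context, let $\xi\subseteq E$ be an edge subset, $t$ a sink node, and $r$ an integer with $\mathrm{mincut}(\xi,t)\le r\le C_t$. Then there exists an edge subset $\eta\subseteq E$ with $|\eta|=r$ that is primary for $t$ and such that $\eta$ is a cut separating $t$ from $\xi$.
   Context: Network: $G=(V,E)$ is a finite directed acyclic graph (parallel edges allowed) with a single source node $s$ and a set of sink nodes $T\subseteq V\setminus\{s\}$; $s$ has no incoming edges and sinks have no outgoing edges. A directed path is a sequence of edges $(e_1,\dots,e_m)$, $m\ge1$, with tail of $e_{k+1}$ equal to head of $e_k$. A cut separating node $v$ from node $u$ is a set of edges whose removal leaves no directed path from $u$ to $v$; $C_t$ is the minimum size of a cut separating sink $t$ from $s$. For $\xi\subseteq E$ and a node $u$, $A\subseteq E$ is a cut separating $u$ from $\xi$ if every directed path in $G$ whose first edge lies in $\xi$ and whose last edge has head $u$ contains an edge of $A$ (equivalently, $A$ separates $\xi$ from $u$ in the reversed network). $\mathrm{mincut}(\xi,u)$ is the minimum size of such a cut; a cut of that size is a minimum cut separating $u$ from $\xi$. A minimum cut separating $u$ from $\xi$ is primary if it separates $u$ from every minimum cut separating $u$ from $\xi$; it exists and is unique. An edge subset $\eta$ is primary for $u$ if $\eta$ is the primary minimum cut separating $u$ from $\eta$. *)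

(* Defs.v *)
From mathcomp Require Import all_boot.
From mathcomp Require Import boolp.
Set Implicit Arguments. Unset Strict Implicit. Unset Printing Implicit Defensive.

(* A network: finite node type V, finite edge type E (parallel edges allowed),
   each edge e goes from node [tl e] to node [hd e]. *)
Section Network.
Variables (V E : finType) (tl hd : E -> V).

Definition is_dpath (p : seq E) : bool :=
  if p is e :: q then path (fun a b => hd a == tl b) e q else false.

(* first and last edges of a path (default value irrelevant for nonempty p) *)
Definition first_edge (e0 : E) (p : seq E) : E := head e0 p.
Definition last_edge (e0 : E) (p : seq E) : E := last e0 p.

Definition path_from_to (u v : V) (p : seq E) : Prop :=
  is_dpath p /\ exists e0, tl (first_edge e0 p) = u /\ hd (last_edge e0 p) = v.

Definition acyclic : Prop := forall (v : V) (p : seq E), ~ path_from_to v v p.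

Definition node_cut (u v : V) (A : {set E}) : Prop :=
  forall p, path_from_to u v p -> exists2 e, e \in p & e \in A.

Definition min_node_cut (s t : V) : nat :=
  \big[minn/#|E|]_(A : {set E} | `[< node_cut s t A >]) #|A|.

Definition edge_cut (xi : {set E}) (u : V) (A : {set E}) : Prop :=
  forall p, is_dpath p ->
    (exists e0, first_edge e0 p \in xi /\ hd (last_edge e0 p) = u) ->
    exists2 e, e \in p & e \in A.

Definition mincut (xi : {set E}) (u : V) : nat :=
  \big[minn/#|E|]_(A : {set E} | `[< edge_cut xi u A >]) #|A|.

Definition min_edge_cut (xi : {set E}) (u : V) (A : {set E}) : Prop :=
  edge_cut xi u A /\ #|A| = mincut xi u.

Definition primary_cut (xi : {set E}) (u : V) (A : {set E}) : Prop :=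
  min_edge_cut xi u A /\ forall B, min_edge_cut xi u B -> edge_cut B u A.

Definition primary_for (u : V) (eta : {set E}) : Prop :=
  primary_cut eta u eta.

End Network.

(* Main.v *)
Require Import Defs.
From mathcomp Require Import all_boot.
From mathcomp Require Import boolp.
Set Implicit Arguments. Unset Strict Implicit. Unset Printing Implicit Defensive.

Section Aux.
Variables (V E : finType) (tl hd : E -> V).

Local Notation edge_cut := (edge_cut tl hd).
Local Notation mincut := (mincut tl hd).
Local Notation is_dpath := (is_dpath tl hd).

Lemma bigmin_le (I : eqType) (r : seq I) (P : pred I) (F : I -> nat) d i :
  i \in r -> P i -> \big[minn/d]_(j <- r | P j) F j <= F i.
Proof.
elim: r => //= j r IH; rewrite inE big_cons; case/orP => [/eqP->|ir] Pi.
  by rewrite Pi geq_minl.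
case: (P j); last exact: IH.
exact: leq_trans (geq_minr _ _) (IH ir Pi).
Qed.

Lemma bigmin_attain (I : eqType) (r : seq I) (P : pred I) (F : I -> nat) d :
  \big[minn/d]_(j <- r | P j) F j = d \/
  exists2 i, P i & \big[minn/d]_(j <- r | P j) F j = F i.
Proof.
apply: (@big_rec _ (fun x => x = d \/ exists2 i, P i & x = F i) d minn (or_introl erefl) I r P F).
move=> i x Pi Kx; rewrite /minn; case: ltnP => _ //.
by right; exists i.
Qed.

Lemma dpath_suffix p1 e p2 : is_dpath (p1 ++ e :: p2) -> is_dpath (e :: p2).
Proof.
case: p1 => [|x p1] //=. rewrite cat_path => /andP [_] /=. by case/andP.
Qed.

Lemma cut_trans (X A B : {set E}) u : edge_cut X u A -> edge_cut A u B -> edge_cut X u B.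
Proof.
move=> hXA hAB p dp hp.
have [e ep eA] := hXA p dp hp.
case/splitPr: ep dp hp => p1 p2 dp [e0 [h1 h2]].
have dq := dpath_suffix dp.
have [f fq fB] : exists2 f, f \in e :: p2 & f \in B.
  apply: hAB dq _; exists e; split => //.
  by move: h2; rewrite /last_edge last_cat.
by exists f => //; rewrite mem_cat fq orbT.
Qed.

Lemma cut_sub (X Y A : {set E}) u : Y \subset X -> edge_cut X u A -> edge_cut Y u A.
Proof.
move=> sYX h p dp [e0 [h1 h2]]; apply: h dp _; exists e0; split => //.
exact: (subsetP sYX).
Qed.

Lemma cut_refl X u : edge_cut X u X.
Proof.
case=> [|x p] // _ [e0 [h1 _]]; exists x => //; first exact: mem_head.
Qed.

Lemma cut_subr (X A B : {set E}) u : A \subset B -> edge_cut X u A -> edge_cut X u B.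
Proof.
move=> sAB h p dp hp; have [e ep eA] := h p dp hp; exists e => //.
exact: (subsetP sAB).
Qed.

Lemma cut_setT X u : edge_cut X u setT.
Proof. case=> [|x p] // _ _; exists x; [exact: mem_head | exact: in_setT]. Qed.

Lemma mincut_le X u B : edge_cut X u B -> mincut X u <= #|B|.
Proof.
move=> h; rewrite /Defs.mincut; apply: bigmin_le; first exact: mem_index_enum.
exact: asboolT.
Qed.

Lemma mincut_ex X u : exists B, edge_cut X u B /\ #|B| = mincut X u.
Proof.
rewrite /Defs.mincut.
case: (bigmin_attain (index_enum {set E}) (fun A => `[< edge_cut X u A >]) (fun A => #|A|) #|E|) => [->|[B PB ->]].
  by exists setT; split; [exact: cut_setT | rewrite cardsT].
by exists B; split => //; exact: asboolW.
Qed.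

Lemma mincut_mono X Y u : edge_cut X u Y -> mincut X u <= mincut Y u.
Proof.
move=> h; have [B [hB <-]] := mincut_ex Y u.
apply: mincut_le; exact: cut_trans h hB.
Qed.

Lemma mincut_add1 X e u : mincut X u <= (mincut (X :\ e) u).+1.
Proof.
have [B [hB <-]] := mincut_ex (X :\ e) u.
apply: (@leq_trans #|e |: B|); last by rewrite cardsU1; case: (e \notin B).
apply: mincut_le => p dp [e0 [h1 h2]].
case ep: (e == head e0 p).
  case: p dp h1 h2 ep => [|x p] // _ _ _ /eqP ->; exists x; first exact: mem_head.
  by rewrite setU11.
have [f fp fB] : exists2 f, f \in p & f \in B.
  apply: hB dp _; exists e0; split => //.
  by rewrite /first_edge in_setD1 eq_sym ep.
by exists f => //; rewrite in_setU1 fB orbT.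
Qed.

Lemma exists_r (xi : {set E}) u r : mincut xi u <= r -> forall n (A : {set E}), #|A :\: xi| = n ->
  xi \subset A -> r <= mincut A u -> exists A0 : {set E}, xi \subset A0 /\ mincut A0 u = r.
Proof.
move=> hxi; elim=> [|n IH] A hn sA hr.
  have sAx : A \subset xi by rewrite -setD_eq0 -cards_eq0 hn.
  have eA : A = xi by apply/eqP; rewrite eqEsubset sAx sA.
  by exists A; split => //; apply/eqP; rewrite eqn_leq hr -eA in hxi *; rewrite hxi.
have : 0 < #|A :\: xi| by rewrite hn.
rewrite card_gt0 => /set0Pn [e]; rewrite in_setD => /andP [exi eA].
have hn' : #|(A :\ e) :\: xi| = n.
  move: hn; rewrite (cardsD1 e) in_setD exi eA /= add1n => -[<-].
  rewrite [in LHS](_ : (A :\ e) :\: xi = (A :\: xi) :\ e) //.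
  by apply/setP => x; rewrite !inE; case: (x == e); rewrite ?andbF.
have sA' : xi \subset A :\ e.
  apply/subsetP => x xx; rewrite in_setD1 (subsetP sA) // andbT.
  by apply: contraNneq exi => <-.
case: (leqP r (mincut (A :\ e) u)) => h; first exact: IH hn' sA' h.
exists A; split => //; apply/eqP; rewrite eqn_leq hr andbT.
exact: leq_trans (mincut_add1 A e u) h.
Qed.

Definition Up u (A : {set E}) := [set e | `[< edge_cut [set e] u A >]].

Lemma up_sub u (A B : {set E}) : edge_cut A u B -> Up u A \subset Up u B.
Proof.
move=> h; apply/subsetP => e; rewrite !inE => /asboolP he.
apply/asboolP; exact: cut_trans he h.
Qed.

Lemma cut_of_up (X A : {set E}) u : X \subset Up u A -> edge_cut X u A.
Proof.
move=> sX p dp [e0 [h1 h2]].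
have := subsetP sX _ h1; rewrite inE => /asboolP hf.
apply: (hf p dp); exists e0; split => //; exact: set11.
Qed.

Lemma self_up u (A : {set E}) : A \subset Up u A.
Proof.
apply/subsetP => e eA; rewrite inE; apply/asboolP.
apply: cut_sub _ (cut_refl (X:=A) (u:=u)); by rewrite sub1set.
Qed.

End Aux.

Theorem lemma9 (V E : finType) (tl hd : E -> V) (s : V) (T : {set V})
  (Hacyc : acyclic tl hd)
  (Hsrc : forall e : E, hd e != s)
  (HT : s \notin T)
  (Hsink : forall (t : V) (e : E), t \in T -> tl e != t)
  (xi : {set E}) (t : V) (r : nat)
  (Ht : t \in T)
  (Hr1 : mincut tl hd xi t <= r) (Hr2 : r <= min_node_cut tl hd s t) :
  exists eta : {set E},
    #|eta| = r /\ primary_for tl hd t eta /\ edge_cut tl hd xi t eta.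
Proof.
have hT : r <= mincut tl hd setT t.
  apply: leq_trans Hr2 _.
  have [B [hB <-]] := mincut_ex tl hd setT t.
  rewrite /min_node_cut; apply: bigmin_le; first exact: mem_index_enum.
  apply: asboolT => p [dp [e0 [h1 h2]]]; apply: (hB p dp); exists e0; split => //.
have [A0 [sA0 hA0]] := exists_r Hr1 (erefl _) (subsetT xi) hT.
pose P (A : {set E}) := `[< edge_cut tl hd xi t A /\ mincut tl hd A t = r >].
have PA0 : P A0 by apply/asboolP; split => //; apply: cut_subr sA0 (cut_refl (X:=xi) (u:=t)).
case: (@arg_maxnP _ A0 P (fun A => #|Up tl hd t A|) PA0) => A /asboolP [hxA hA] Amax.
have [eta [hAe ce]] := mincut_ex tl hd A t.
have hxe := cut_trans hxA hAe.
have hme : mincut tl hd eta t = r.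
  apply/eqP; rewrite eqn_leq; apply/andP; split.
    by apply: leq_trans (mincut_le (cut_refl (X:=eta) (u:=t))) _; rewrite ce hA.
  rewrite -hA; exact: mincut_mono hAe.
have Peta : P eta by apply/asboolP.
have eUp : Up tl hd t A = Up tl hd t eta.
  apply/eqP; rewrite eqEcard up_sub //=; exact: Amax.
exists eta; split; first by rewrite ce hA.
split => //; split; first by split; [exact: cut_refl | rewrite ce hA hme].
move=> B [hB cB].
have hmB : mincut tl hd B t = r.
  apply/eqP; rewrite eqn_leq; apply/andP; split.
    by apply: leq_trans (mincut_le (cut_refl (X:=B) (u:=t))) _; rewrite cB hme.
  rewrite -hme; exact: mincut_mono hB.
have PB : P B by apply/asboolP; split => //; exact: cut_trans hxe hB.
have eB : Up tl hd t eta = Up tl hd t B.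
  apply/eqP; rewrite eqEcard up_sub //= -eUp; exact: Amax.
apply: cut_of_up; rewrite eB; exact: self_up.
Qed.
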